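(* Let $\mathcal{L}$ be any fragment (set of specifications) of quantifier-free non-linear real arithmetic ($\mathsf{NRA}$) for which there is a sound and complete algorithm $\mathcal{A}_{\mathcal{L}}$ for solving $\mathcal{RPS}$, i.e. an algorithm which, for every specification $\varphi(\mathbf{X},\mathbf{Y})\in\mathcal{L}$, outputs a program of the grammar $\mathcal{G}$ that realizes $\varphi$ over the reals. Then $\mathcal{A}_{\mathcal{L}}$ also solves $\mathcal{RPS}_{\mathbb{Q}}$ for the fragment $\mathcal{L}$, i.e. for every $\varphi\in\mathcal{L}$ the program it outputs realizes $\varphi$ over the rationals. Moreover, there exists a fragment of $\mathsf{NRA}$ for which there does not exist any sound and complete algorithm for solving $\mathcal{RPS}$, but for which there is a sound and complete algorithm for solving $\mathcal{RPS}_{\mathbb{Q}}$.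
   Context: A specification is a quantifier-free $\mathsf{NRA}$ formula $\varphi(\mathbf{X},\mathbf{Y})$: a Boolean combination of polynomial inequalities $p\bowtie 0$, $\bowtie\in\{<,>,\le,\ge\}$, where $p$ is a polynomial with rational coefficients over the input variables $\mathbf{X}=(x_1,\dots,x_m)$ and the output variables $\mathbf{Y}=(y_1,\dots,y_n)$. The grammar $\mathcal{G}$ generates imperative programs built from: assignments $v\leftarrow t$ where $t$ is a polynomial term with rational coefficients over program variables; conditionals ''if $C$ then $P$ else $P'$''; loops ''while $C$ do $P$'', where each condition $C$ is a Boolean combination of polynomial inequalities over program variables; sequential composition; and return statements returning either a tuple of variables or the special symbol $\bot$. Input variables $\mathbf{X}$ are never assigned. For a set $D\in\{\mathbb{R},\mathbb{Q}\}$, a program $\mathsf{Prog}(\mathbf{X})$ realizes $\varphi$ over $D$ if for every $\mathbf{A}\in D^{|\mathbf{X}|}$, running $\mathsf{Prog}$ on $\mathbf{A}$ terminates and returns either $\bot$, in which case $\varphi(\mathbf{A},\mathbf{B})$ is false for all $\mathbf{B}\in D^{|\mathbf{Y}|}$, or a tuple $\mathbf{B}\in D^{|\mathbf{Y}|}$ with $\varphi(\mathbf{A},\mathbf{B})$ true. $\mathcal{RPS}$ (resp. $\mathcal{RPS}_{\mathbb{Q}}$) is the problem of producing, from $\varphi$, a program of $\mathcal{G}$ realizing $\varphi$ over $\mathbb{R}$ (resp. over $\mathbb{Q}$). *)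

(* Defs.v *)
From HB Require Import structures.
From mathcomp Require Import all_boot all_order all_algebra.
From Stdlib Require Import Reals.
From mathcomp Require Import Rstruct.
Set Implicit Arguments. Unset Strict Implicit. Unset Printing Implicit Defensive.
Import Order.TTheory GRing.Theory Num.Theory.
Local Open Scope ring_scope.

Inductive term (V : Type) : Type :=
  | TVar of V
  | TConst of rat
  | TAdd of term V & term V
  | TMul of term V & term V
  | TOpp of term V.

Fixpoint teval (V : Type) (D : numFieldType) (rho : V -> D) (t : term V) : D :=
  match t with
  | TVar v => rho v
  | TConst q => ratr q
  | TAdd t1 t2 => teval rho t1 + teval rho t2
  | TMul t1 t2 => teval rho t1 * teval rho t2
  | TOpp t1 => - teval rho t1
  end.

Inductive cmp := CLt | CGt | CLe | CGe.

Definition cmp_eval (D : numFieldType) (c : cmp) (x : D) : bool :=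
  match c with
  | CLt => x < 0
  | CGt => x > 0
  | CLe => x <= 0
  | CGe => x >= 0
  end.

Inductive fml (V : Type) : Type :=
  | FAtom of term V & cmp
  | FNot of fml V
  | FAnd of fml V & fml V
  | FOr of fml V & fml V.

Fixpoint feval (V : Type) (D : numFieldType) (rho : V -> D) (f : fml V) : bool :=
  match f with
  | FAtom t c => cmp_eval c (teval rho t)
  | FNot f1 => ~~ feval rho f1
  | FAnd f1 f2 => feval rho f1 && feval rho f2
  | FOr f1 f2 => feval rho f1 || feval rho f2
  end.

Record spec := Spec {
  sm : nat;
  sn : nat;
  sphi : fml ('I_sm + 'I_sn)%type    (* inl i = x_(i+1), inr j = y_(j+1) *)
}.

Definition spec_holds (D : numFieldType) (phi : spec) (A B : seq D) : bool :=
  feval (fun v : ('I_(sm phi) + 'I_(sn phi))%type =>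
           match v with inl i => nth 0 A i | inr j => nth 0 B j end)
        (sphi phi).

(* program variables: input variables PIn i (= x_(i+1), never assigned)
   and local variables PLoc k *)
Inductive pvar := PIn of nat | PLoc of nat.

Inductive prog :=
  | PAssign of nat & term pvar            (* PLoc k <- t *)
  | PIf of fml pvar & prog & prog
  | PWhile of fml pvar & prog
  | PSeq of prog & prog
  | PRet of seq pvar
  | PRetBot.

Inductive outcome (D : Type) := OBot | OTuple of seq D.

Inductive result (D : Type) :=
  | RNormal of (nat -> D)
  | RReturned of outcome D.

Section Exec.
Variable D : numFieldType.
Variable A : seq D.

Definition var_val (s : nat -> D) (v : pvar) : D :=
  match v with PIn i => nth 0 A i | PLoc k => s k end.

Definition upd (s : nat -> D) (k : nat) (x : D) : nat -> D :=
  fun k' => if k' == k then x else s k'.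

(* big-step semantics; a run terminates iff it has a derivation *)
Inductive exec : (nat -> D) -> prog -> result D -> Prop :=
  | ExAssign s k t :
      exec s (PAssign k t) (RNormal (upd s k (teval (var_val s) t)))
  | ExIfT s c P Q r :
      feval (var_val s) c -> exec s P r -> exec s (PIf c P Q) r
  | ExIfF s c P Q r :
      ~~ feval (var_val s) c -> exec s Q r -> exec s (PIf c P Q) r
  | ExWhileF s c P :
      ~~ feval (var_val s) c -> exec s (PWhile c P) (RNormal s)
  | ExWhileTN s s' c P r :
      feval (var_val s) c -> exec s P (RNormal s') ->
      exec s' (PWhile c P) r -> exec s (PWhile c P) r
  | ExWhileTR s c P o :
      feval (var_val s) c -> exec s P (RReturned o) ->
      exec s (PWhile c P) (RReturned o)
  | ExSeqN s s' P Q r :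
      exec s P (RNormal s') -> exec s' Q r -> exec s (PSeq P Q) r
  | ExSeqR s P Q o :
      exec s P (RReturned o) -> exec s (PSeq P Q) (RReturned o)
  | ExRet s vs :
      exec s (PRet vs) (RReturned (OTuple (map (var_val s) vs)))
  | ExRetBot s :
      exec s PRetBot (RReturned (OBot D)).
End Exec.

Definition realizes (D : numFieldType) (P : prog) (phi : spec) : Prop :=
  forall A : seq D, size A = sm phi ->
    exists o : outcome D,
      exec A (fun _ => 0) P (RReturned o) /\
      match o with
      | OBot => forall B : seq D, size B = sn phi -> ~ spec_holds phi A B
      | OTuple B => size B = sn phi /\ spec_holds phi A B
      end.

Definition fragment := spec -> Prop.
Definition algorithm := spec -> prog.

Definition solves (D : numFieldType) (L : fragment) (alg : algorithm) : Prop :=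
  forall phi, L phi -> realizes D (alg phi) phi.

(* Main.v *)
Require Import Defs.
From mathcomp Require Import all_boot all_order all_algebra.
From Stdlib Require Import Reals.
From mathcomp Require Import Rstruct.
From mathcomp Require Import zify.
Import Order.TTheory GRing.Theory Num.Theory.

Section Aux.
Local Open Scope ring_scope.

Lemma no_sqrt2 (q : rat) : q * q = 2 -> False.
Proof.
move=> hq.
have e : (numq q * numq q) = 2 * (denq q * denq q).
  apply: (@intr_inj rat).
  rewrite !rmorphM /= !numqE.
  have -> : (2 : int)%:~R = 2 :> rat by [].
  by rewrite mulrACA hq.
have co := coprime_num_den q.
set a := `|numq q|%nat in co; set b := `|denq q|%nat in co.
have e2 : (a * a = 2 * (b * b))%nat.
  by rewrite /a /b -!abszM e abszM.
have cab : coprime (a * a) (b * b).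
  by rewrite coprimeMl !coprimeMr co.
have hd : (b * b %| a * a)%nat by rewrite e2 dvdn_mull.
have : (b * b %| gcdn (a * a) (b * b))%nat by rewrite dvdn_gcd hd dvdnn.
rewrite (eqP cab) dvdn1 => /eqP hb.
rewrite hb in e2.
clearbody a; move: e2; clear; case: a => [|[|[|a]]] //=; rewrite !mulSn; lia.
Qed.

Definition rq : rat -> R := ratr.

Lemma teval_tr (V : Type) (rhoR : V -> R) (rhoQ : V -> rat) :
  (forall v, rhoR v = rq (rhoQ v)) ->
  forall t, teval rhoR t = rq (teval rhoQ t).
Proof.
move=> h; elim => [v|q|t1 IH1 t2 IH2|t1 IH1 t2 IH2|t1 IH1] /=.
- exact: h.
- by rewrite /rq (fmorph_rat (ratr : {rmorphism rat -> R})).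
- by rewrite IH1 IH2 /rq rmorphD.
- by rewrite IH1 IH2 /rq rmorphM.
- by rewrite IH1 /rq rmorphN.
Qed.

Arguments teval_tr {V rhoR rhoQ}.

Lemma feval_tr (V : Type) (rhoR : V -> R) (rhoQ : V -> rat) :
  (forall v, rhoR v = rq (rhoQ v)) ->
  forall f, feval rhoR f = feval rhoQ f.
Proof.
move=> h; elim => [t c|f IH|f1 IH1 f2 IH2|f1 IH1 f2 IH2] /=.
- rewrite (teval_tr h) /rq; case: c => /=.
  + exact: ltrq0.
  + exact: ltr0q.
  + exact: lerq0.
  + exact: ler0q.
- by rewrite IH.
- by rewrite IH1 IH2.
- by rewrite IH1 IH2.
Qed.

Arguments feval_tr {V rhoR rhoQ}.

Lemma nth_tr (AQ : seq rat) i : nth 0 (map rq AQ) i = rq (nth 0 AQ i).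
Proof. by elim: AQ i => [|a AQ IH] [|i] //=; rewrite /rq rmorph0. Qed.

Lemma spec_tr phi (A B : seq rat) :
  spec_holds phi (map rq A) (map rq B) = spec_holds phi A B.
Proof. by apply: feval_tr => -[i|j]; rewrite nth_tr. Qed.

Definition rel (r : result R) (rQ : result rat) : Prop :=
  match r, rQ with
  | RNormal s, RNormal sQ => forall k, s k = rq (sQ k)
  | RReturned (OBot), RReturned (OBot) => True
  | RReturned (OTuple B), RReturned (OTuple BQ) => B = map rq BQ
  | _, _ => False
  end.

Lemma sim (AQ : seq rat) s P r : exec (map rq AQ) s P r ->
  forall sQ, (forall k, s k = rq (sQ k)) ->
  exists rQ, exec AQ sQ P rQ /\ rel r rQ.
Proof.
have vv : forall s sQ, (forall k, s k = rq (sQ k)) ->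
    forall v, var_val (map rq AQ) s v = rq (var_val AQ sQ v).
  by move=> s0 sQ0 h [i|k] /=; rewrite ?nth_tr ?h.
elim => {s P r}.
- move=> s k t sQ h; eexists; split; first exact: ExAssign.
  move=> k'; rewrite /upd; case: eqP => _ //.
  exact: teval_tr (vv _ _ h) t.
- move=> s c P Q r hc _ IH sQ h.
  have [rQ [e hr]] := IH sQ h.
  exists rQ; split=> //; apply: ExIfT => //; by rewrite -(feval_tr (vv _ _ h)).
- move=> s c P Q r hc _ IH sQ h.
  have [rQ [e hr]] := IH sQ h.
  exists rQ; split=> //; apply: ExIfF => //; by rewrite -(feval_tr (vv _ _ h)).
- move=> s c P hc sQ h; exists (RNormal sQ); split=> //.
  by apply: ExWhileF; rewrite -(feval_tr (vv _ _ h)).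
- move=> s s' c P r hc _ IH1 _ IH2 sQ h.
  have [[sQ'|o] [e1 hr1]] := IH1 sQ h; last by destruct o.
  have [rQ [e2 hr2]] := IH2 sQ' hr1.
  exists rQ; split=> //; apply: ExWhileTN e2 => //.
  by rewrite -(feval_tr (vv _ _ h)).
- move=> s c P o hc _ IH sQ h.
  have [[sQ'|oQ] [e hr]] := IH sQ h; first by destruct o.
  exists (RReturned oQ); split=> //; apply: ExWhileTR => //.
  by rewrite -(feval_tr (vv _ _ h)).
- move=> s s' P Q r _ IH1 _ IH2 sQ h.
  have [[sQ'|o] [e1 hr1]] := IH1 sQ h; last by destruct o.
  have [rQ [e2 hr2]] := IH2 sQ' hr1.
  by exists rQ; split=> //; apply: ExSeqN e2.
- move=> s P Q o _ IH sQ h.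
  have [[sQ'|oQ] [e hr]] := IH sQ h; first by destruct o.
  by exists (RReturned oQ); split=> //; apply: ExSeqR.
- move=> s vs sQ h; eexists; split; first exact: ExRet.
  by rewrite /= -map_comp; apply: eq_map => v /=; apply: vv.
- by move=> s sQ h; eexists; split; first exact: ExRetBot.
Qed.

Lemma part1 (L : fragment) (alg : algorithm) :
  solves (R : numFieldType) L alg -> solves (rat : numFieldType) L alg.
Proof.
move=> H phi Lphi AQ hA.
have hA' : size (map rq AQ) = sm phi by rewrite size_map.
have [o [e ho]] := H phi Lphi _ hA'.
have [rQ [eQ hr]] := @sim AQ _ _ _ e (fun _ => 0) (fun k => esym (rmorph0 _)).
case: rQ eQ hr => [sQ|oQ] eQ hr; first by case: o {e ho} hr.
exists oQ; split=> //.
case: o e ho hr => [|B] e ho; case: oQ eQ => [|BQ] eQ //= hr.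
- move=> BQ hB hs; apply: (ho (map rq BQ)); first by rewrite size_map.
  by rewrite spec_tr.
- subst B; case: ho; rewrite size_map spec_tr; by split.
Qed.

Definition t2 : term ('I_0 + 'I_1)%type :=
  TAdd (TMul (TVar (inr ord0)) (TVar (inr ord0))) (TConst _ (-2)).
Definition sq2 : spec := @Spec 0 1 (FAnd (FAtom t2 CLe) (FAtom t2 CGe)).

Lemma sq2_holds (D : numFieldType) A (b : D) :
  spec_holds sq2 A [:: b] = (b * b == 2).
Proof.
rewrite /spec_holds /= rmorphN /= (_ : ratr 2 = 2 :> D); last first.
  by rewrite (ratr_nat D 2).
by rewrite -eq_le subr_eq0.
Qed.

Lemma part2 : exists L : fragment,
      ~ (exists alg : algorithm, solves (R : numFieldType) L alg) /\
      (exists alg : algorithm, solves (rat : numFieldType) L alg).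
Proof.
exists (fun phi => phi = sq2); split.
- case=> alg H.
  have [o [e ho]] := H sq2 erefl [::] erefl.
  have [rQ [eQ hr]] := @sim [::] _ _ _ e (fun _ => 0) (fun k => esym (rmorph0 _)).
  case: rQ eQ hr => [sQ|oQ] eQ hr; first by case: o {e ho} hr.
  case: o e ho hr => [|B] e ho; case: oQ eQ => [|BQ] eQ //= hr.
  + apply: (ho [:: Num.sqrt 2]) => //.
    by rewrite sq2_holds -expr2 sqr_sqrtr.
  + subst B; case: ho; rewrite size_map; clear e eQ.
    case: BQ => [|q [|? ?]] //= _.
    rewrite -/rq (sq2_holds _ _ (rq q)) /rq -rmorphM /=.
    rewrite (_ : 2 = ratr (2 : rat) :> R); last by rewrite (ratr_nat R 2).
    rewrite (inj_eq (fmorph_inj (ratr : {rmorphism rat -> R}))).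
    by move/eqP/no_sqrt2.
- exists (fun _ => PRetBot) => phi -> A hA; exists (OBot rat); split.
    exact: ExRetBot.
  move=> [|q [|? ?]] //= _; rewrite sq2_holds; by move/eqP/no_sqrt2.
Qed.

End Aux.

Theorem mainTheorem1 :
  (forall (L : fragment) (alg : algorithm),
      solves (R : numFieldType) L alg -> solves (rat : numFieldType) L alg) /\
  (exists L : fragment,
      ~ (exists alg : algorithm, solves (R : numFieldType) L alg) /\
      (exists alg : algorithm, solves (rat : numFieldType) L alg)).
Proof.
split; first exact: part1.
exact: part2.
Qed.
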